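(* Let $r \in \mathbb{N}$ with $r\ge 2$. (1) $k_{\mathsf{D}}(C_2^r) = \min \{k \in \mathbb{N} \colon \mathsf{D}_0(C_2^r) = \mathsf{D}_k(C_2^r) - 2k \}$. (2) If $B$ is a zero-sum sequence over $C_2^r$ with $\max\mathsf{L}(B)\le k_{\mathsf{D}}(C_2^r)$ and $|B| = \mathsf{D}_{k_{\mathsf{D}}(C_2^r)}(C_2^r)$, then $B$ is squarefree and $0$ does not occur in $B$. In particular, $k_{\mathsf{D}}(C_2^r) \le \lfloor (2^r-1)/3 \rfloor$.
   Context: $C_2^r$ is the elementary abelian $2$-group of rank $r$. A sequence over a finite abelian group $G$ is a finite unordered list of elements with repetitions; it is squarefree if no element occurs more than once; zero-sum means its terms sum to $0$; a minimal zero-sum sequence is a non-empty zero-sum sequence with no proper non-empty zero-sum subsequence; for a zero-sum sequence $B$, $\mathsf{L}(B)$ is the set of all $t$ such that $B$ is a product of $t$ minimal zero-sum sequences. $\mathsf{D}_k(G)$ is the smallest $\ell$ such that every sequence over $G$ of length at least $\ell$ has $k$ disjoint non-empty zero-sum subsequences. $\mathsf{D}_0(G)\in\mathbb{N}_0$ is the (known to exist) integer with $\mathsf{D}_k(G)=\mathsf{D}_0(G)+k\exp(G)$ for all sufficiently large $k$, and $k_{\mathsf{D}}(G)$ is the minimal $k_0\in\mathbb{N}$ with $\mathsf{D}_k(G)=\mathsf{D}_0(G)+k\exp(G)$ for all $k\ge k_0$. *)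

(* Defs.v *)
From HB Require Import structures.
From mathcomp Require Import all_boot all_order all_algebra.
From mathcomp Require Import boolp.
Set Implicit Arguments. Unset Strict Implicit. Unset Printing Implicit Defensive.
Import GRing.Theory.
Local Open Scope ring_scope.

(* least natural number satisfying P (0 if none exists) *)
Definition cmin (P : nat -> Prop) : nat :=
  match pselect (exists n, P n) with
  | left H =>
      @ex_minn (fun n => `[< P n >])
        (let: ex_intro n Hn := H in ex_intro _ n (asboolT Hn))
  | right _ => 0%N
  end.

Definition C2 (r : nat) := 'rV['F_2]_r.

Section Seqs.
Variable G : zmodType.

(* sequences over G are (unordered) lists: seq G, compared up to perm_eq *)
Definition zero_sum (s : seq G) : bool := \sum_(x <- s) x == 0.

Definition minimal_zero_sum (s : seq G) : Prop :=
  s != [::] /\ zero_sum s /\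
  forall m : bitseq, mask m s != [::] -> zero_sum (mask m s) ->
    size (mask m s) = size s.

Definition in_L (B : seq G) (t : nat) : Prop :=
  exists ss : seq (seq G), size ss = t /\
    (forall u, u \in ss -> minimal_zero_sum u) /\ perm_eq B (flatten ss).

Definition has_k_disjoint_zs (k : nat) (s : seq G) : Prop :=
  exists ss : seq (seq G), size ss = k /\
    (forall u, u \in ss -> u != [::] /\ zero_sum u) /\
    exists rest : seq G, perm_eq s (flatten ss ++ rest).

Definition Dk (k : nat) : nat :=
  cmin (fun l => forall s : seq G, (l <= size s)%N -> has_k_disjoint_zs k s).

Definition zexp : nat :=
  cmin (fun n => (0 < n)%N /\ forall x : G, x *+ n = 0).

Definition D0 : nat :=
  cmin (fun d => exists K, forall k, (K <= k)%N -> Dk k = (d + k * zexp)%N).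

Definition kD : nat :=
  cmin (fun k0 => (0 < k0)%N /\ forall k, (k0 <= k)%N -> Dk k = (D0 + k * zexp)%N).
End Seqs.

(* Main.v *)
Require Import Defs.
From mathcomp Require Import all_boot all_order all_algebra.
From mathcomp Require Import zify boolp.
From Stdlib Require Import Classical.
Set Implicit Arguments. Unset Strict Implicit. Unset Printing Implicit Defensive.
Import GRing.Theory.
Local Open Scope ring_scope.

Section Gen.
Variable G : zmodType.
Implicit Types s u rest : seq G.

Lemma zs_perm s t : perm_eq s t -> zero_sum s = zero_sum t.
Proof. by move=> p; rewrite /zero_sum (perm_big _ p). Qed.

Lemma zs_cat s t : zero_sum s -> zero_sum t -> zero_sum (s ++ t).
Proof. by rewrite /zero_sum big_cat /= => /eqP -> /eqP ->; rewrite addr0. Qed.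

Lemma zs_catl s t : zero_sum (s ++ t) -> zero_sum s -> zero_sum t.
Proof. by rewrite /zero_sum big_cat /= => /eqP + /eqP E; rewrite E add0r => ->. Qed.

Lemma zs_flatten (ss : seq (seq G)) :
  (forall u, u \in ss -> zero_sum u) -> zero_sum (flatten ss).
Proof.
elim: ss => [|u ss IH] H /=; first by rewrite /zero_sum big_nil.
apply: zs_cat; first by apply: H; rewrite inE eqxx.
by apply: IH => v vin; apply: H; rewrite inE vin orbT.
Qed.

Lemma mask_rest (m : bitseq) s : exists rest, perm_eq s (mask m s ++ rest).
Proof.
elim: s m => [|x s IH] [|b m] /=; try by exists [::].
  by exists (x :: s).
have [r Hr] := IH m; case: b.
  by exists r; rewrite /= perm_cons.
exists (x :: r).
by rewrite perm_sym -cat1s perm_catCA /= perm_cons perm_sym.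
Qed.

Lemma factor u : u != [::] -> zero_sum u ->
  exists fs : seq (seq G), (0 < size fs)%N /\
    (forall v, v \in fs -> minimal_zero_sum v) /\ perm_eq u (flatten fs).
Proof.
move: {2}(size u) (leqnn (size u)) => n; elim: n u => [|n IH] u.
  by rewrite leqn0 => /nilP ->; rewrite eqxx.
move=> Hs Hne Hz.
case: (classic (minimal_zero_sum u)) => Hm.
  exists [:: u]; split=> //; split; last by rewrite /= cats0.
  by move=> v; rewrite inE => /eqP ->.
have [m [Hm1 [Hm2 Hm3]]] : exists m : bitseq, mask m u != [::] /\ zero_sum (mask m u) /\
   size (mask m u) <> size u.
  apply: NNPP => Hn; apply: Hm; split=> //; split=> // m H1 H2.
  by apply: NNPP => H3; apply: Hn; exists m.
have [r Hr] := mask_rest m u.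
have Hsz := perm_size Hr; rewrite size_cat in Hsz.
have Hlt : (size (mask m u) < size u)%N.
  by rewrite ltn_neqAle; apply/andP; split; [apply/eqP|rewrite Hsz leq_addr].
have Hrne : r != [::].
  apply/eqP => Er; move: Hsz; rewrite Er addn0 => E; by apply: Hm3.
have Hrz : zero_sum r.
  apply: zs_catl Hm2; by rewrite -(zs_perm Hr).
have [f1 [F1a [F1b F1c]]] := IH (mask m u) (leq_trans (leq_trans Hlt Hs) (leqnn _)) Hm1 Hm2.
have Hrs : (size r <= n)%N.
  have : (size r < size u)%N.
    rewrite Hsz -{1}[size r]add0n ltn_add2r lt0n size_eq0; exact: Hm1.
  by move=> H; rewrite -ltnS (leq_trans H Hs).
have [f2 [F2a [F2b F2c]]] := IH r Hrs Hrne Hrz.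
exists (f1 ++ f2); split; first by rewrite size_cat (leq_trans F1a) ?leq_addr.
split.
  by move=> v; rewrite mem_cat => /orP [] ?; [apply: F1b | apply: F2b].
rewrite flatten_cat; apply: perm_trans Hr _; exact: perm_cat.
Qed.

Lemma factor_all (ss : seq (seq G)) B : perm_eq B (flatten ss) ->
  (forall u, u \in ss -> u != [::] /\ zero_sum u) ->
  exists t, (size ss <= t)%N /\ in_L B t.
Proof.
elim: ss B => [|u ss IH] B Hp Hg.
  by exists 0%N; split=> //; exists [::]; split=> //; split.
have [Hu1 Hu2] := Hg u (mem_head _ _).
have [fs [F1 [F2 F3]]] := factor Hu1 Hu2.
have [t [T1 [fs' [T2 [T3 T4]]]]] := IH (flatten ss) (perm_refl _)
  (fun v vin => Hg v (@mem_behead _ (u :: ss) v vin)).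
exists (size fs + t)%N; split.
  by rewrite /= -add1n leq_add.
exists (fs ++ fs'); split; first by rewrite size_cat T2.
split.
  by move=> v; rewrite mem_cat => /orP [] ?; [apply: F2 | apply: T3].
apply: perm_trans Hp _; rewrite flatten_cat /=; exact: perm_cat.
Qed.

Lemma hk_of_blocks k (ss : seq (seq G)) rest s :
  (forall u, u \in ss -> u != [::] /\ zero_sum u) ->
  perm_eq s (flatten ss ++ rest) -> (k <= size ss)%N -> has_k_disjoint_zs k s.
Proof.
move=> Hg Hp Hk; exists (take k ss); split; first by rewrite size_take_min; apply/minn_idPl.
split; first by move=> u /mem_take; apply: Hg.
exists (flatten (drop k ss) ++ rest).
by rewrite catA -flatten_cat cat_take_drop.
Qed.

Lemma hk_perm k s t : perm_eq s t -> has_k_disjoint_zs k s -> has_k_disjoint_zs k t.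
Proof.
move=> p [ss [H1 [H2 [rest H3]]]].
rewrite perm_sym in p.
eapply hk_of_blocks; [exact: H2 | exact: (perm_trans p H3) | by rewrite H1].
Qed.

Lemma hk_ext k s t : has_k_disjoint_zs k s -> has_k_disjoint_zs k (s ++ t).
Proof.
move=> [ss [H1 [H2 [rest H3]]]].
apply: (hk_of_blocks (rest := rest ++ t) H2); last by rewrite H1.
by rewrite catA perm_cat2r.
Qed.

Lemma pick x s (ss : seq (seq G)) rest : perm_eq (x :: s) (flatten ss ++ rest) ->
  (exists rest', perm_eq s (flatten ss ++ rest')) \/
  (exists u ss', perm_eq ss (u :: ss') /\ x \in u /\
     perm_eq s (rem x u ++ flatten ss' ++ rest)).
Proof.
move=> Hp.
have : x \in flatten ss ++ rest by rewrite -(perm_mem Hp) mem_head.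
rewrite mem_cat => /orP [/flattenP [u uin xu] | xr].
  right; exists u, (rem u ss); split; first exact: perm_to_rem.
  split=> //.
  rewrite -(perm_cons x); apply: (perm_trans Hp).
  rewrite -cat_cons catA perm_cat2r.
  apply: (perm_trans (perm_flatten (perm_to_rem uin))) => /=.
  rewrite -cat_cons perm_cat2r; exact: perm_to_rem.
left; exists (rem x rest).
rewrite -(perm_cons x); apply: (perm_trans Hp).
rewrite perm_sym -cat1s perm_catCA perm_cat2l perm_sym.
exact: perm_to_rem.
Qed.

Lemma hk_drop k x s : has_k_disjoint_zs k.+1 (x :: s) -> has_k_disjoint_zs k s.
Proof.
move=> [ss [H1 [H2 [rest H3]]]].
case: (pick H3) => [[r Hr] | [u [ss' [P1 [P2 P3]]]]].
  by apply: (hk_of_blocks H2 Hr); rewrite H1.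
have Hs' : size ss' = k by move: (perm_size P1); rewrite H1 /= => [[]].
apply: (hk_of_blocks (ss := ss') (rest := rem x u ++ rest)).
- by move=> v vin; apply: H2; rewrite (perm_mem P1) inE vin orbT.
- by apply: (perm_trans P3); rewrite perm_catCA.
- by rewrite Hs'.
Qed.

Lemma rem_sum g u : g \in u -> \sum_(y <- u) y = g + \sum_(y <- rem g u) y.
Proof. by move=> H; rewrite (perm_big _ (perm_to_rem H)) big_cons. Qed.

Lemma rem_good g u : g != 0 -> g \in u -> zero_sum u ->
  rem g u != [::] /\ \sum_(y <- rem g u) y = - g.
Proof.
move=> gn gu /eqP; rewrite (rem_sum gu) => E; split.
  by apply/eqP => E'; move: E; rewrite E' big_nil addr0 => E''; rewrite E'' eqxx in gn.
by apply: (addrI g); rewrite E subrr.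
Qed.

Lemma hk_gg k g s : g + g = 0 -> g != 0 ->
  has_k_disjoint_zs k.+1 (g :: g :: s) -> has_k_disjoint_zs k s.
Proof.
move=> gg gn [ss [H1 [H2 [rest H3]]]].
case: (pick H3) => [[r Hr] | [u [ss' [P1 [P2 P3]]]]].
  apply: (hk_drop (x := g)); exists ss; split=> //; split=> //; by exists r.
have Hs' : size ss' = k by move: (perm_size P1); rewrite H1 /= => [[]].
have Hg' : forall v, v \in ss' -> v != [::] /\ zero_sum v.
  by move=> v vin; apply: H2; rewrite (perm_mem P1) inE vin orbT.
have [U1 U2] : u != [::] /\ zero_sum u by apply: H2; rewrite (perm_mem P1) mem_head.
have P3' : perm_eq (g :: s) (flatten ss' ++ (rem g u ++ rest)).
  by apply: (perm_trans P3); rewrite perm_catCA.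
case: (pick P3') => [[r Hr] | [v [ss'' [Q1 [Q2 Q3]]]]].
  by apply: (hk_of_blocks Hg' Hr); rewrite Hs'.
have [V1 V2] : v != [::] /\ zero_sum v by apply: Hg'; rewrite (perm_mem Q1) mem_head.
have [R1 S1] := rem_good gn P2 U2.
have [R2 S2] := rem_good gn Q2 V2.
apply: (hk_of_blocks (ss := (rem g u ++ rem g v) :: ss'') (rest := rest)).
- move=> w; rewrite inE => /orP [/eqP -> | win].
    split; first by rewrite -size_eq0 size_cat addn_eq0 negb_and size_eq0 R1.
    by rewrite /zero_sum big_cat /= S1 S2 -opprD gg oppr0.
  by apply: Hg'; rewrite (perm_mem Q1) inE win orbT.
- apply: (perm_trans Q3) => /=.
  by rewrite -!catA perm_sym perm_catCA perm_cat2l perm_catCA.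
- by move: (perm_size Q1); rewrite Hs' /= => ->.
Qed.
End Gen.

Lemma cmin_spec (P : nat -> Prop) : (exists n, P n) ->
  P (cmin P) /\ forall m, P m -> (cmin P <= m)%N.
Proof.
move=> ex; rewrite /cmin; case: pselect => // H.
case: ex_minnP => n /asboolP Pn Hmin; split=> // m Pm.
by apply: Hmin; apply/asboolP.
Qed.

Lemma cmin_uniq (P : nat -> Prop) d : P d -> (forall e, P e -> e = d) -> cmin P = d.
Proof. by move=> Pd U; have [H _] := cmin_spec (ex_intro _ d Pd); apply: U. Qed.

Section Dgen.
Variable G : zmodType.

Definition PD k l := forall s : seq G, (l <= size s)%N -> has_k_disjoint_zs k s.

Lemma Dk_spec k : (exists l, PD k l) ->
  PD k (Dk G k) /\ forall l, PD k l -> (Dk G k <= l)%N.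
Proof. exact: cmin_spec. Qed.

Lemma hk0 (s : seq G) : has_k_disjoint_zs 0 s.
Proof. by exists [::]; split=> //; split=> //; exists s. Qed.

Lemma Dk0 : Dk G 0 = 0%N.
Proof.
have H : PD 0 0 by move=> s _; apply: hk0.
have [_ H2] := Dk_spec (ex_intro _ 0%N H).
by apply/eqP; rewrite -leqn0 H2.
Qed.

Lemma hk_take k l (s : seq G) : has_k_disjoint_zs k (take l s) -> has_k_disjoint_zs k s.
Proof. by move/(hk_ext (drop l s)); rewrite cat_take_drop. Qed.

Lemma Dk_ext k l : (exists l, PD k l) -> (l < Dk G k)%N ->
  exists s : seq G, size s = l /\ ~ has_k_disjoint_zs k s.
Proof.
move=> ex lt; apply: NNPP => H.
have [_ H2] := Dk_spec ex.
have : PD k l.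
  move=> s ls; apply: (@hk_take k l); apply: NNPP => Hn; apply: H.
  by exists (take l s); split=> //; rewrite size_take_min; apply/minn_idPl.
by move/H2; rewrite leqNgt lt.
Qed.

Lemma hk_nil k : (0 < k)%N -> ~ has_k_disjoint_zs k ([::] : seq G).
Proof.
move=> kp [[|u ss] [H1 [H2 [rest H3]]]]; first by rewrite -H1 in kp.
have [U1 _] := H2 u (mem_head _ _).
by move: (perm_size H3); rewrite /= size_cat size_cat; case: u {H1 H2 H3} U1.
Qed.

Lemma Dk_pos k : (exists l, PD k l) -> (0 < k)%N -> (0 < Dk G k)%N.
Proof.
move=> ex kp; have [H1 _] := Dk_spec ex.
rewrite lt0n; apply/eqP => E; move: H1; rewrite E => H.
by apply: (hk_nil kp); apply: H.
Qed.

Lemma Dk_step k (g : G) : g + g = 0 -> g != 0 -> (0 < k)%N ->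
  (exists l, PD k l) -> (exists l, PD k.+1 l) ->
  (Dk G k + 2 <= Dk G k.+1)%N.
Proof.
move=> gg gn kp ex1 ex2.
have := Dk_pos ex1 kp => D1.
have lt1 : ((Dk G k).-1 < Dk G k)%N by rewrite prednK.
have [s [S1 S2]] := Dk_ext ex1 lt1.
rewrite leqNgt; apply/negP => lt.
have [P _] := Dk_spec ex2.
apply: S2; apply: (hk_gg gg gn); apply: P => /=.
rewrite S1; lia.
Qed.
End Dgen.

Lemma addxx r (x : C2 r) : x + x = 0.
Proof. by rewrite -mulr2n -scaler_nat (@pchar_Fp_0 2) ?scale0r. Qed.

Lemma cardC2 r : #|C2 r| = (2 ^ r)%N.
Proof. by rewrite card_mx card_Fp // mul1n. Qed.

Lemma dup (T : eqType) (s : seq T) : ~~ uniq s -> exists x s', perm_eq s (x :: x :: s').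
Proof.
elim: s => [|x s IH] //=; rewrite negb_and negbK => /orP [xs | /IH [y [s' H]]].
  by exists x, (rem x s); rewrite perm_cons; apply: perm_to_rem.
exists y, (x :: s').
by rewrite -(perm_cons x) in H; apply: (perm_trans H); rewrite perm_sym -[y :: y :: x :: s']/([:: y; y] ++ [:: x] ++ s') perm_catCA.
Qed.

Lemma ar1 k N n : (2 * k.+1 + N <= n.+2 -> 2 * k + N <= n)%N.
Proof. lia. Qed.

Lemma upper r k (s : seq (C2 r)) : (2 * k + 2 ^ r <= size s)%N -> has_k_disjoint_zs k s.
Proof.
elim: k s => [|k IH] s Hs; first by apply: hk0.
have : ~~ uniq s.
  apply/negP => /card_uniqP E.
  have := max_card (mem s); rewrite E cardC2 => h; have := leq_trans Hs h; lia.
case/dup => x [s' P].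
have := perm_size P => /= Es.
have Hs' : (2 * k + 2 ^ r <= size s')%N.
  by move: Hs; rewrite Es; apply: ar1.
have [ss [H1 [H2 [rest H3]]]] := IH s' Hs'.
apply: (hk_of_blocks (ss := [:: x; x] :: ss) (rest := rest)).
- move=> u; rewrite inE => /orP [/eqP -> | uin]; last exact: H2.
  by split=> //; rewrite /zero_sum !big_cons big_nil addr0 addxx.
- by apply: (perm_trans P); rewrite /= !perm_cons.
- by rewrite /= H1.
Qed.

Lemma finD r k : exists l, PD (C2 r) k l.
Proof. by exists (2 * k + 2 ^ r)%N => s; apply: upper. Qed.

Lemma Dk_up r k : (Dk (C2 r) k <= 2 * k + 2 ^ r)%N.
Proof. have [_ H] := Dk_spec (finD r k); apply: H => s; apply: upper. Qed.

Definition eb r (i : 'I_r) : C2 r := \row_(j < r) ((j == i)%:R : 'F_2).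

Lemma D1_ge3 r : (2 <= r)%N -> (3 <= Dk (C2 r) 1)%N.
Proof.
move=> hr.
have h0 : (0 < r)%N by lia.
pose i0 := Ordinal h0; pose i1 := Ordinal hr.
pose a := eb i0; pose b := eb i1.
have Ha : a != 0.
  apply/eqP => /matrixP /(_ ord0 i0); rewrite !mxE eqxx => /eqP; by rewrite oner_eq0.
have Hb : b != 0.
  apply/eqP => /matrixP /(_ ord0 i1); rewrite !mxE eqxx => /eqP; by rewrite oner_eq0.
have Hab : a + b != 0.
  apply/eqP => /matrixP /(_ ord0 i0); rewrite !mxE eqxx.
  have -> : (i0 == i1) = false by apply/eqP => /(congr1 val).
  by rewrite addr0 => /eqP; rewrite oner_eq0.
have Hn : ~ has_k_disjoint_zs 1 [:: a; b].
  move=> [[|u [|? ?]] [//= H1 [H2 [rest H3]]]].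
  have [U1 U2] := H2 u (mem_head _ _).
  have := perm_size H3; rewrite /= cats0 size_cat.
  case: u U1 U2 H2 H3 => [|c [|d [|? ?]]] //= _ U2 _ H3 Hsz.
    have : c \in [:: a; b] by rewrite (perm_mem H3) /= mem_head.
    move: U2; rewrite /zero_sum big_cons big_nil addr0 => /eqP ->.
    by rewrite !inE !(eq_sym 0) (negbTE Ha) (negbTE Hb).
  have Er : rest = [::] by case: rest Hsz H3.
  move: H3; rewrite Er => /zs_perm; rewrite U2 /zero_sum !big_cons big_nil addr0.
  by move/eqP => E; rewrite E eqxx in Hab.
rewrite leqNgt; apply/negP => lt.
have [P _] := Dk_spec (finD r 1).
by apply: Hn; apply: P => /=; lia.
Qed.

Lemma ar2 a n : (a + 3 <= n.+2 -> a + 1 <= n)%N.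
Proof. lia. Qed.
Lemma ar3 a n : (a + 3 <= n.+1 -> a + 1 <= n)%N.
Proof. lia. Qed.
Lemma ar4 K a b N : (a + b + 1 <= N -> 3 * K <= a -> K * 3 <= N - 1)%N.
Proof. lia. Qed.

Lemma eb_neq0 r (hr : (2 <= r)%N) : exists g : C2 r, g != 0.
Proof.
have h0 : (0 < r)%N by lia.
exists (eb (Ordinal h0)).
apply/eqP => /matrixP /(_ ord0 (Ordinal h0)); rewrite !mxE eqxx => /eqP; by rewrite oner_eq0.
Qed.

Lemma zexp2 r : (2 <= r)%N -> zexp (C2 r) = 2%N.
Proof.
move=> hr.
have P2 : (0 < 2)%N /\ forall x : C2 r, x *+ 2 = 0 by split=> // x; rewrite mulr2n addxx.
have [[Q1 Q2] Q3] := @cmin_spec (fun n => (0 < n)%N /\ forall x : C2 r, x *+ n = 0) (ex_intro _ 2%N P2).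
have := Q3 _ P2; rewrite /zexp.
move: Q1 Q2; case: (cmin _) => [|[|[|n]]] //= _ H _.
have [g gn] := eb_neq0 hr.
by move: (H g); rewrite mulr1n => E; rewrite E eqxx in gn.
Qed.

Lemma step r k : (2 <= r)%N -> (Dk (C2 r) k + 2 <= Dk (C2 r) k.+1)%N.
Proof.
move=> hr; case: k => [|k].
  by rewrite Dk0 add0n; apply: leq_trans (D1_ge3 hr).
have [g gn] := eb_neq0 hr.
exact: Dk_step (addxx g) gn _ (finD r _) (finD r _).
Qed.

Lemma mono2 r k d : (2 <= r)%N -> (Dk (C2 r) k + 2 * d <= Dk (C2 r) (k + d))%N.
Proof.
move=> hr; elim: d => [|d IH]; first by rewrite addn0 muln0 addn0.
rewrite addnS; have := step (k + d) hr; lia.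
Qed.

Lemma ge2k r k : (2 <= r)%N -> (2 * k <= Dk (C2 r) k)%N.
Proof. by move=> hr; have := mono2 0 k hr; rewrite Dk0 add0n. Qed.

Lemma stab (f : nat -> nat) M : (forall k, f k <= f k.+1)%N -> (forall k, f k <= M)%N ->
  exists K, forall k, (K <= k)%N -> f k = f K.
Proof.
move=> mono bd.
have hm : forall i j, (i <= j)%N -> (f i <= f j)%N.
  by move=> i j; apply: (homo_leq leqnn leq_trans mono).
suff : forall n K0, (M - f K0 <= n)%N -> exists K, forall k, (K <= k)%N -> f k = f K.
  by move/(_ M 0%N); apply; apply: leq_subr.
elim=> [|n IH] K0 HK0.
  exists K0 => k Hk; apply/eqP; rewrite eqn_leq (hm _ _ Hk) andbT.
  have := bd k; move: HK0; lia.
case: (classic (forall k, (K0 <= k)%N -> f k = f K0)) => H; first by exists K0.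
have [k Hk] : exists k, ~ ((K0 <= k)%N -> f k = f K0).
  by apply: not_all_ex_not.
have Hk1 : (K0 <= k)%N by apply: NNPP => Hn; apply: Hk => H0; case: (Hn H0).
have Hk2 : f k <> f K0 by move=> E; apply: Hk => _; exact: E.
apply: (IH k).
have := hm _ _ Hk1; have := bd k; move: HK0 Hk2; lia.
Qed.

Lemma D0_facts r : (2 <= r)%N ->
  (exists K0, forall k, (K0 <= k)%N -> Dk (C2 r) k = (D0 (C2 r) + 2 * k)%N) /\
  (forall k, (Dk (C2 r) k <= D0 (C2 r) + 2 * k)%N).
Proof.
move=> hr.
pose f k := (Dk (C2 r) k - 2 * k)%N.
have fm : forall k, (f k <= f k.+1)%N.
  move=> k; rewrite /f; have := step k hr; have := ge2k k hr; lia.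
have fb : forall k, (f k <= 2 ^ r)%N.
  move=> k; rewrite /f; have := Dk_up r k; lia.
have [K0 HK0] := stab fm fb.
have hm : forall i j, (i <= j)%N -> (f i <= f j)%N.
  by move=> i j; apply: (homo_leq leqnn leq_trans fm).
have E : D0 (C2 r) = f K0.
  rewrite /D0 zexp2 //; apply: cmin_uniq.
    exists K0 => k Hk; have := HK0 k Hk; rewrite /f; have := ge2k k hr; lia.
  move=> e [K1 HK1].
  have := HK1 _ (leq_maxr K0 K1); have := HK0 _ (leq_maxl K0 K1).
  rewrite /f; set m := maxn K0 K1; lia.
split.
  exists K0 => k Hk; have := HK0 k Hk; rewrite E /f; have := ge2k k hr; have := ge2k K0 hr; lia.
move=> k; rewrite E.
have := hm _ _ (leq_maxl k K0); rewrite (HK0 _ (leq_maxr k K0)) /f.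
have := ge2k k hr; lia.
Qed.

Lemma kD_facts r : (2 <= r)%N ->
  (0 < kD (C2 r))%N /\ Dk (C2 r) (kD (C2 r)) = (D0 (C2 r) + 2 * kD (C2 r))%N /\
  (forall k, (0 < k)%N -> (D0 (C2 r) + 2 * k)%N = Dk (C2 r) k -> (kD (C2 r) <= k)%N) /\
  (Dk (C2 r) (kD (C2 r)).-1 + 3 <= Dk (C2 r) (kD (C2 r)))%N.
Proof.
move=> hr.
have [[K0 HK0] Hle] := D0_facts hr.
have Hmin : forall k, (0 < k)%N -> (D0 (C2 r) + 2 * k)%N = Dk (C2 r) k ->
   forall k', (k <= k')%N -> Dk (C2 r) k' = (D0 (C2 r) + 2 * k')%N.
  move=> k kp E k' Hk.
  have := mono2 k (k' - k) hr; rewrite subnKC // -E.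
  have := Hle k'; lia.
rewrite /kD zexp2 //.
set Q := fun k0 => _.
have exQ : exists k0, Q k0.
  exists (maxn K0 1); split; first by rewrite leq_max orbT.
  move=> k Hk; rewrite HK0; first by rewrite mulnC.
  exact: leq_trans (leq_maxl _ _) Hk.
have [[Q1 Q2] Q3] := cmin_spec exQ.
set K := cmin Q in Q1 Q2 Q3 *.
have HK : Dk (C2 r) K = (D0 (C2 r) + 2 * K)%N by rewrite Q2 // mulnC.
have Hm : forall k, (0 < k)%N -> (D0 (C2 r) + 2 * k)%N = Dk (C2 r) k -> (K <= k)%N.
  move=> k kp E; apply: Q3; split=> // k' Hk'; rewrite mulnC; exact: Hmin E k' Hk'.
split=> //; split=> //; split=> //.
clear Q2 Q3; case: K Q1 HK Hm => [|[|K]] //= _ HK Hm.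
  by rewrite Dk0; apply: D1_ge3.
have : Dk (C2 r) K.+1 <> (D0 (C2 r) + 2 * K.+1)%N.
  by move=> E; have := Hm K.+1 isT (esym E); rewrite ltnn.
have := Hle K.+1; rewrite HK; lia.
Qed.

Lemma key r j (B' : seq (C2 r)) : zero_sum B' -> (Dk (C2 r) j + 1 <= size B')%N ->
  exists ss : seq (seq (C2 r)), size ss = j.+1 /\
    (forall u, u \in ss -> u != [::] /\ zero_sum u) /\ perm_eq B' (flatten ss).
Proof.
move=> Hz Hs.
have [P _] := Dk_spec (finD r j).
have : has_k_disjoint_zs j (take (Dk (C2 r) j) B').
  apply: P; rewrite size_take_min leq_min leqnn /=; exact: leq_trans (leq_addr 1 _) Hs.
move=> [ss [H1 [H2 [rest H3]]]].
set R := rest ++ drop (Dk (C2 r) j) B'.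
have HP : perm_eq B' (flatten ss ++ R).
  by rewrite -{1}(cat_take_drop (Dk (C2 r) j) B') /R catA perm_cat2r.
have HR1 : R != [::].
  rewrite -size_eq0 /R size_cat size_drop; move: Hs; rewrite addn1 => Hs.
  by rewrite addn_eq0 negb_and subn_eq0 -ltnNge Hs orbT.
have HR2 : zero_sum R.
  apply: (zs_catl (s := flatten ss)); first by rewrite -(zs_perm HP).
  by apply: zs_flatten => u /H2 [].
exists (R :: ss); split; first by rewrite /= H1.
split.
  by move=> u; rewrite inE => /orP [/eqP -> | /H2].
by apply: (perm_trans HP); rewrite /= perm_catC.
Qed.

Lemma contra_L r K (B B' w : seq (C2 r)) : (0 < K)%N ->
  perm_eq B (w ++ B') -> w != [::] -> zero_sum w -> zero_sum B' ->
  (Dk (C2 r) K.-1 + 1 <= size B')%N -> exists t, (K < t)%N /\ in_L B t.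
Proof.
move=> Kp HP w1 w2 Hz Hs.
have [ss [H1 [H2 H3]]] := key Hz Hs.
have HP' : perm_eq B (flatten (w :: ss)).
  by apply: (perm_trans HP); rewrite /= perm_cat2l.
have Hg : forall u, u \in w :: ss -> u != [::] /\ zero_sum u.
  by move=> u; rewrite inE => /orP [/eqP -> | /H2].
have [t [T1 T2]] := factor_all HP' Hg.
by exists t; split=> //; move: T1; rewrite /= H1 prednK.
Qed.

Lemma part2 r K (B : seq (C2 r)) : (0 < K)%N ->
  (Dk (C2 r) K.-1 + 3 <= Dk (C2 r) K)%N -> zero_sum B ->
  (forall t, in_L B t -> (t <= K)%N) -> size B = Dk (C2 r) K ->
  uniq B /\ (0 : C2 r) \notin B.
Proof.
move=> Kp gap Hz HL Hs.
have noL : forall t, (K < t)%N -> in_L B t -> False.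
  by move=> t lt /HL; rewrite leqNgt lt.
split.
  apply/negP => /negP /dup [x [B' P]].
  have Hz' : zero_sum B'.
    apply: (zs_catl (s := [:: x; x])); first by rewrite -(zs_perm P).
    by rewrite /zero_sum !big_cons big_nil addr0 addxx.
  have W : zero_sum [:: x; x] by rewrite /zero_sum !big_cons big_nil addr0 addxx.
  have S : (Dk (C2 r) K.-1 + 1 <= size B')%N.
    by have := perm_size P; rewrite Hs /= => E; move: gap; rewrite E; apply: ar2.
  have [t [T1 T2]] := @contra_L r K B B' [:: x; x] Kp P isT W Hz' S.
  exact: noL T1 T2.
apply/negP => H0.
have P := perm_to_rem H0.
have Hz' : zero_sum (rem 0 B).
  apply: (zs_catl (s := [:: 0])); first by rewrite -(zs_perm P).
  by rewrite /zero_sum big_cons big_nil addr0.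
have W : zero_sum [:: (0 : C2 r)] by rewrite /zero_sum big_cons big_nil addr0.
have S : (Dk (C2 r) K.-1 + 1 <= size (rem (0%R : C2 r) B))%N.
  by have := perm_size P; rewrite Hs /= => E; move: gap; rewrite E; apply: ar3.
have [t [T1 T2]] := @contra_L r K B (rem (0 : C2 r) B) [:: (0 : C2 r)] Kp P isT W Hz' S.
exact: noL T1 T2.
Qed.

Lemma uniq_flatten_mem (T : eqType) (ss : seq (seq T)) u :
  uniq (flatten ss) -> u \in ss -> uniq u.
Proof.
elim: ss => [|v ss IH] //=; rewrite cat_uniq => /and3P [U1 _ U3].
by rewrite inE => /orP [/eqP -> | /IH]; [|apply].
Qed.

Lemma size_flatten3 (T : eqType) (ss : seq (seq T)) :
  (forall u, u \in ss -> 3 <= size u)%N -> (3 * size ss <= size (flatten ss))%N.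
Proof.
elim: ss => [|v ss IH] //= H.
rewrite size_cat mulnS leq_add //; first by apply: H; rewrite mem_head.
by apply: IH => u uin; apply: H; rewrite inE uin orbT.
Qed.

Lemma block3 r (u : seq (C2 r)) : uniq u -> (0 : C2 r) \notin u -> u != [::] ->
  zero_sum u -> (3 <= size u)%N.
Proof.
case: u => [|a [|b [|c w]]] //= U N _.
  rewrite /zero_sum big_cons big_nil addr0 => /eqP E.
  by move: N; rewrite E inE eqxx.
rewrite /zero_sum !big_cons big_nil addr0 => /eqP E.
have : b = a by apply: (addrI a); rewrite E addxx.
by move=> Eb; move: U; rewrite Eb inE eqxx.
Qed.

Lemma part3 r K : (2 <= r)%N -> (0 < K)%N ->
  (forall B : seq (C2 r), zero_sum B -> (forall t, in_L B t -> (t <= K)%N) ->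
     size B = Dk (C2 r) K -> uniq B /\ (0 : C2 r) \notin B) ->
  (K <= (2 ^ r - 1) %/ 3)%N.
Proof.
move=> hr Kp H2.
have Dp := Dk_pos (finD r K) Kp.
have lt1 : ((Dk (C2 r) K).-1 < Dk (C2 r) K)%N by rewrite prednK.
have [s [S1 S2]] := Dk_ext (finD r K) lt1.
set sg := \sum_(y <- s) y.
set B := sg :: s.
have Bz : zero_sum B by rewrite /zero_sum big_cons addxx.
have Bs : size B = Dk (C2 r) K by rewrite /= S1 prednK.
have good : forall fs : seq (seq (C2 r)), (forall v, v \in fs -> minimal_zero_sum v) ->
   forall u, u \in fs -> u != [::] /\ zero_sum u.
  by move=> fs F u /F [U1 [U2 _]].
have BL : forall t, in_L B t -> (t <= K)%N.
  move=> t [fs [T1 [T2 T3]]]; rewrite leqNgt; apply/negP => lt.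
  rewrite -[flatten fs]cats0 in T3.
  case: (pick T3) => [[r' Hr] | [u [fs' [P1 [P2 P3]]]]].
    by apply: S2; apply: (hk_of_blocks (good _ T2) Hr); rewrite T1 ltnW.
  apply: S2.
  have Hg' : forall v, v \in fs' -> v != [::] /\ zero_sum v.
    by move=> v vin; apply: (good _ T2); rewrite (perm_mem P1) inE vin orbT.
  apply: (hk_of_blocks (rest := rem sg u) Hg').
    by apply: (perm_trans P3); rewrite cats0 perm_catC.
  by move: (perm_size P1); rewrite T1 /= => E; move: lt; rewrite E.
have [Bu B0] := H2 B Bz BL Bs.
have card : (size B + 1 <= 2 ^ r)%N.
  have U0 : uniq ((0 : C2 r) :: B) by rewrite cons_uniq B0 Bu.
  move/card_uniqP: U0 => E.
  have := max_card (mem ((0 : C2 r) :: B)); rewrite E cardC2 /= addn1.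
  done.
have [P _] := Dk_spec (finD r K).
have [ss [H1 [Hg [rest H3]]]] := P B (eq_leq (esym Bs)).
have U : uniq (flatten ss ++ rest) by rewrite -(perm_uniq H3).
have U' : uniq (flatten ss) by move: U; rewrite cat_uniq => /andP [].
have S3 : (3 * size ss <= size (flatten ss))%N.
  apply: size_flatten3 => u uin.
  have [G1 G2] := Hg u uin.
  apply: block3 => //; first exact: uniq_flatten_mem U' uin.
  apply/negP => u0; move: B0; rewrite (perm_mem H3) mem_cat.
  by have -> : (0 : C2 r) \in flatten ss by apply/flattenP; exists u.
have := perm_size H3; rewrite size_cat => E.
rewrite leq_divRL //.
move: card S3; rewrite E H1; apply: ar4.
Qed.


Theorem proposition7p5 (r : nat) (hr : (2 <= r)%N) :
  (* (1) k_D(C_2^r) = min {k in N : D_0 = D_k - 2k} *)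
  ((0 < kD (C2 r))%N /\
   (D0 (C2 r) + 2 * kD (C2 r))%N = Dk (C2 r) (kD (C2 r)) /\
   (forall k : nat, (0 < k)%N -> (D0 (C2 r) + 2 * k)%N = Dk (C2 r) k ->
      (kD (C2 r) <= k)%N)) /\
  (* (2) *)
  (forall B : seq (C2 r), zero_sum B ->
     (forall t, in_L B t -> (t <= kD (C2 r))%N) ->
     size B = Dk (C2 r) (kD (C2 r)) ->
     uniq B /\ (0 : C2 r) \notin B) /\
  (* in particular *)
  (kD (C2 r) <= (2 ^ r - 1) %/ 3)%N.
Proof.
have [K1 [K2 [K3 K4]]] := kD_facts hr.
have P2 : forall B : seq (C2 r), zero_sum B ->
     (forall t, in_L B t -> (t <= kD (C2 r))%N) ->
     size B = Dk (C2 r) (kD (C2 r)) ->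
     uniq B /\ (0 : C2 r) \notin B.
  by move=> B Hz HL Hs; apply: part2 K1 K4 Hz HL Hs.
split; first by split=> //; split=> //; rewrite K2.
split; first exact: P2.
exact: part3 hr K1 P2.
Qed.
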